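(* Let $Q$ be a $3$-divisible Moufang loop and let $X$ be a $2$-divisible normal subloop of $Q$ that is a commutative group. Then the congruence $\{aX:a\in Q\}$ on $Q$ induced by $X$ is an abelian congruence of $Q$.
   Context: A loop is a magma $(Q,\cdot,1)$ with identity in which all left and right translations are bijections; it is Moufang if it satisfies $xy\cdot zx=(x\cdot yz)x$ for all $x,y,z$ (Moufang loops are power associative). A power associative loop is $d$-divisible if the map $x\mapsto x^d$ is surjective. A subloop is normal if it is the kernel of a loop homomorphism. For a normal subloop $X$ of $Q$, the induced congruence has classes $aX$; it is abelian if its Freese–McKenzie commutator with itself is trivial; equivalently, $Q$ is isomorphic to an abelian extension of $X$ by $Q/X$: a loop on $Q/X\times X$ with $(r,x)(s,y)=(rs,\varphi_{r,s}(x)+\psi_{r,s}(y)+\theta_{r,s})$, $\varphi_{r,s},\psi_{r,s}\in\mathrm{Aut}(X)$, $\theta_{r,s}\in X$, $\varphi_{r,1}=\mathrm{id}=\psi_{1,r}$, $\theta_{1,r}=0=\theta_{r,1}$. *)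

(* Defs.v *)
(* The division axioms say exactly
   that all left translations L_x : y |-> x y and right translations
   R_x : y |-> y x are bijections (with inverses y |-> x \ y and y |-> y / x). *)
Record Loop : Type := {
  carrier :> Type;
  mul : carrier -> carrier -> carrier;
  ldiv : carrier -> carrier -> carrier;
  rdiv : carrier -> carrier -> carrier;   (* y / x *)
  one : carrier;
  mul1l : forall x, mul one x = x;
  mulr1 : forall x, mul x one = x;
  ldivK : forall x y, ldiv x (mul x y) = y;
  mulldiv : forall x y, mul x (ldiv x y) = y;
  rdivK : forall x y, rdiv (mul y x) x = y;
  mulrdiv : forall x y, mul (rdiv y x) x = y
}.
Arguments mul {l}. Arguments ldiv {l}. Arguments rdiv {l}. Arguments one {l}.

Definition Moufang (Q : Loop) : Prop :=
  forall x y z : Q, mul (mul x y) (mul z x) = mul (mul x (mul y z)) x.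

(* Powers x^n (well defined in power-associative loops, e.g. Moufang loops). *)
Fixpoint lpow {Q : Loop} (x : Q) (n : nat) : Q :=
  match n with
  | O => one
  | S n => mul x (lpow x n)
  end.

Definition divisible (Q : Loop) (d : nat) : Prop :=
  forall y : Q, exists x : Q, lpow x d = y.

Definition loop_hom {Q L : Loop} (f : Q -> L) : Prop :=
  forall x y : Q, f (mul x y) = mul (f x) (f y).

Definition normal_subloop (Q : Loop) (X : Q -> Prop) : Prop :=
  exists (L : Loop) (f : Q -> L), loop_hom f /\ (forall x, X x <-> f x = one).

Definition sub_commutative_group (Q : Loop) (X : Q -> Prop) : Prop :=
  (forall x y z, X x -> X y -> X z -> mul (mul x y) z = mul x (mul y z)) /\
  (forall x y, X x -> X y -> mul x y = mul y x).

Definition sub_divisible (Q : Loop) (X : Q -> Prop) (d : nat) : Prop :=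
  forall y, X y -> exists x, X x /\ lpow x d = y.

(* The congruence induced by X: a ~ b iff aX = bX, i.e. b = a x with x in X. *)
Definition cong_of (Q : Loop) (X : Q -> Prop) (a b : Q) : Prop :=
  exists x, X x /\ b = mul a x.

Inductive term : Type :=
  | tX : nat -> term
  | tY : nat -> term
  | tOne : term
  | tMul : term -> term -> term
  | tLdiv : term -> term -> term
  | tRdiv : term -> term -> term.

Fixpoint teval {Q : Loop} (ex ey : nat -> Q) (t : term) : Q :=
  match t with
  | tX n => ex n
  | tY n => ey n
  | tOne => one
  | tMul s u => mul (teval ex ey s) (teval ex ey u)
  | tLdiv s u => ldiv (teval ex ey s) (teval ex ey u)
  | tRdiv s u => rdiv (teval ex ey s) (teval ex ey u)
  end.

(* Term condition C(alpha, alpha; 0): for every term t(x, y) and tuples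
   a alpha b, c alpha d (componentwise),
   t(a, c) = t(a, d) implies t(b, c) = t(b, d).
   This says alpha centralizes itself, i.e. [alpha, alpha] = 0 (for loops,
   a Mal'cev variety, this is the Freese-McKenzie commutator): alpha is an
   abelian congruence. *)
Definition abelian_congruence (Q : Loop) (alpha : Q -> Q -> Prop) : Prop :=
  forall (t : term) (a b c d : nat -> Q),
    (forall i, alpha (a i) (b i)) -> (forall i, alpha (c i) (d i)) ->
    teval a c t = teval a d t ->
    teval b c t = teval b d t.

(* Main.v *)
Require Import Defs.
From Stdlib Require Import FunctionalExtensionality Setoid.

Section LoopBasics.
Variable l : Loop.
Lemma canl (x y z : l) : mul x y = mul x z -> y = z.
Proof. intro H. rewrite <- (ldivK l x y), H. apply ldivK. Qed.
Lemma canr (x y z : l) : mul y x = mul z x -> y = z.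
Proof. intro H. rewrite <- (rdivK l x y), H. apply rdivK. Qed.
Lemma ldiv1 (w : l) : ldiv one w = w.
Proof. rewrite <- (mul1l l w) at 1. apply ldivK. Qed.
Lemma ldiv_same (w : l) : ldiv w w = one.
Proof. apply (canl w). rewrite mulldiv, mulr1. reflexivity. Qed.
End LoopBasics.

Section Main.
Variable Q : Loop.
Hypothesis HM : Moufang Q.
Local Infix "⋅" := (@mul Q) (at level 40, left associativity).

Definition inv (x : Q) : Q := ldiv x one.

Lemma flex x z : x⋅(z⋅x) = (x⋅z)⋅x.
Proof. pose proof (HM x one z) as H. rewrite mulr1, mul1l in H. exact H. Qed.

Lemma mulKV x z : x⋅(inv x⋅z) = z.
Proof. pose proof (HM x (inv x) z) as H. unfold inv in *. rewrite mulldiv, mul1l in H.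
  symmetry. apply (canr _ x). exact H. Qed.

Lemma invK x w : inv x ⋅ (x⋅w) = w.
Proof. apply (canl _ x). rewrite mulKV. reflexivity. Qed.

Lemma inv_mul x : inv x ⋅ x = one.
Proof. pose proof (invK x one) as H. rewrite mulr1 in H. exact H. Qed.

Lemma mul_inv x : x ⋅ inv x = one.
Proof. unfold inv. apply mulldiv. Qed.

Lemma mulVK x y : (y ⋅ inv x) ⋅ x = y.
Proof. pose proof (HM x y (inv x)) as H. rewrite inv_mul, mulr1, <- flex in H.
  symmetry. apply (canl _ x). exact H. Qed.

Lemma mulKr x y : (y ⋅ x) ⋅ inv x = y.
Proof. apply (canr _ x). rewrite mulVK. reflexivity. Qed.

Lemma invinv x : inv (inv x) = x.
Proof. apply (canl _ (inv x)). rewrite mul_inv, inv_mul. reflexivity. Qed.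

Lemma inv_prod x y : inv (x⋅y) = inv y ⋅ inv x.
Proof. assert (H : inv (x⋅y) ⋅ ((x⋅y)⋅inv y) = inv y) by apply invK.
  rewrite mulKr in H. rewrite <- H, mulKr. reflexivity. Qed.

Lemma ldiv_inv w v : ldiv w v = inv w ⋅ v.
Proof. rewrite <- (mulKV w v) at 1. apply ldivK. Qed.

Lemma rdiv_inv v w : rdiv v w = v ⋅ inv w.
Proof. rewrite <- (mulVK w v) at 1. apply rdivK. Qed.

Lemma sigma x w v : x⋅(w⋅v) = ((x⋅w)⋅x)⋅(inv x⋅v).
Proof. pose proof (HM x (w⋅v) (inv v)) as H. rewrite mulKr in H.
  rewrite <- H. replace (inv x ⋅ v) with (inv (inv v ⋅ x)) by (rewrite inv_prod, invinv; reflexivity).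
  rewrite mulKr. reflexivity. Qed.

Lemma rho x u w : (u⋅w)⋅x = (u⋅inv x)⋅((x⋅w)⋅x).
Proof. pose proof (HM x (inv u) (u⋅w)) as H. rewrite invK in H.
  rewrite <- H. replace (u ⋅ inv x) with (inv (x ⋅ inv u)) by (rewrite inv_prod, invinv; reflexivity).
  rewrite invK. reflexivity. Qed.

Definition Atp (a b c : Q -> Q) := forall u v, a u ⋅ b v = c (u ⋅ v).

Lemma Atp_comp a b c a' b' c' : Atp a b c -> Atp a' b' c' ->
  Atp (fun w => a (a' w)) (fun w => b (b' w)) (fun w => c (c' w)).
Proof. intros H H' u v. rewrite H, H'. reflexivity. Qed.

Lemma Atp_inv a b c a' b' c' : Atp a b c -> (forall u, a (a' u) = u) ->
  (forall u, b (b' u) = u) -> (forall u, c' (c u) = u) -> Atp a' b' c'.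
Proof. intros H Ha Hb Hc u v. rewrite <- (Ha u) at 2. rewrite <- (Hb v) at 2.
  rewrite H, Hc. reflexivity. Qed.

Lemma tauA x : Atp (fun u => x ⋅ u) (fun v => v ⋅ x) (fun w => (x⋅w)⋅x).
Proof. intros u v. apply HM. Qed.

Lemma sigmaA x : Atp (fun v => (x⋅v)⋅x) (fun v => inv x ⋅ v) (fun v => x ⋅ v).
Proof. intros u v. symmetry. apply sigma. Qed.

Lemma rhoA x : Atp (fun u => u ⋅ inv x) (fun w => (x⋅w)⋅x) (fun w => w ⋅ x).
Proof. intros u v. symmetry. apply rho. Qed.

Lemma sigmaA_inv x : Atp (fun v => inv x ⋅ (v ⋅ inv x)) (fun v => x ⋅ v) (fun v => inv x ⋅ v).
Proof. apply (Atp_inv _ _ _ _ _ _ (sigmaA x)).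
  - intro u. rewrite mulKV, mulVK. reflexivity.
  - intro u. apply invK.
  - intro u. apply invK.
Qed.

Definition Ps (g : Q -> Q) (a : Q) := forall u v, g (u ⋅ v) = (g u ⋅ a) ⋅ (inv a ⋅ g v).

Lemma AT a b c : Atp a b c -> c one = one -> Ps c (a one).
Proof. intros H H1 u v.
  assert (e0 : a one ⋅ b one = one) by (rewrite H, mulr1; exact H1).
  assert (eb : b one = inv (a one)).
  { apply (canl _ (a one)). rewrite e0, mul_inv. reflexivity. }
  assert (ea : a u = c u ⋅ a one).
  { rewrite <- (mulr1 _ u) at 2. rewrite <- H, eb, mulVK. reflexivity. }
  assert (ebv : b v = inv (a one) ⋅ c v).
  { rewrite <- (mul1l _ v) at 2. rewrite <- H, invK. reflexivity. }
  rewrite <- H, ea, ebv. reflexivity.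
Qed.

Lemma SA g a : Ps g a -> forall u v, g (u ⋅ (v ⋅ u)) = g u ⋅ (g v ⋅ g u).
Proof. intros H u v.
  assert (key : forall x y, inv a ⋅ ((y ⋅ a) ⋅ (inv a ⋅ x)) = (inv a ⋅ y) ⋅ x).
  { intros x y. pose proof (sigma a (inv a ⋅ y) x) as S. rewrite mulKV in S.
    rewrite <- S, invK. reflexivity. }
  rewrite H, (H v u), key, HM, mulKV, flex. reflexivity.
Qed.


Variable X : Q -> Prop.
Variable L : Loop.
Variable f : Q -> L.
Hypothesis Hf : loop_hom f.
Hypothesis HX : forall x, X x <-> f x = one.
Hypothesis Hass : forall x y z, X x -> X y -> X z -> (x⋅y)⋅z = x⋅(y⋅z).
Hypothesis Hcomm : forall x y, X x -> X y -> x⋅y = y⋅x.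
Hypothesis H2 : sub_divisible Q X 2.

Lemma f_one : f one = one.
Proof. apply (canl _ (f one)). rewrite <- Hf, !mulr1. reflexivity. Qed.

Lemma X_one : X one.
Proof. apply HX, f_one. Qed.

Lemma X_mul a b : X a -> X b -> X (a ⋅ b).
Proof. intros Ha Hb. apply HX in Ha. apply HX in Hb. apply HX. rewrite Hf, Ha, Hb, mulr1. reflexivity. Qed.

Lemma f_ldiv a b : f (ldiv a b) = ldiv (f a) (f b).
Proof. apply (canl _ (f a)). rewrite <- Hf, !mulldiv. reflexivity. Qed.

Lemma f_rdiv a b : f (rdiv a b) = rdiv (f a) (f b).
Proof. apply (canr _ (f b)). rewrite <- Hf, !mulrdiv. reflexivity. Qed.

Lemma swap4 a b c d : X a -> X b -> X c -> X d -> (a⋅b)⋅(c⋅d) = (a⋅c)⋅(b⋅d).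
Proof. intros Ha Hb Hc Hd.
  rewrite Hass, <- (Hass b c d), (Hcomm b c), (Hass c b d), <- (Hass a c (b⋅d)); auto using X_mul.
Qed.

Definition Hom (g : Q -> Q) := (forall a, X a -> X (g a)) /\
  (forall a b, X a -> X b -> g (a ⋅ b) = g a ⋅ g b).

Lemma Hom_ext g g' : (forall a, g a = g' a) -> Hom g -> Hom g'.
Proof. intros E [H1 H2']. split; intros; rewrite <- ?E; auto. Qed.

Lemma Hom_comp g g' : Hom g -> Hom g' -> Hom (fun a => g (g' a)).
Proof. intros [A1 A2] [B1 B2]. split; intros; auto. rewrite B2, A2; auto. Qed.

Lemma Hom_one g : Hom g -> g one = one.
Proof. intros [A1 A2]. apply (canl _ (g one)). rewrite <- A2, !mulr1; auto using X_one. Qed.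

Lemma Hom_of_SA g : (forall u v, g (u ⋅ (v ⋅ u)) = g u ⋅ (g v ⋅ g u)) -> g one = one ->
  (forall a, X a -> X (g a)) -> Hom g.
Proof. intros S g1 HgX. split; auto.
  assert (sq : forall a, g (a ⋅ a) = g a ⋅ g a).
  { intro a. pose proof (S a one) as E. rewrite !mul1l, g1, mul1l in E. exact E. }
  intros c b Hc Hb. destruct (H2 c Hc) as [a [Ha Ea]]. simpl in Ea. rewrite mulr1 in Ea. subst c.
  assert (E1 : (a ⋅ a) ⋅ b = a ⋅ (b ⋅ a)) by (rewrite (Hcomm b a), Hass; auto).
  rewrite E1, S, sq.
  rewrite (Hcomm (g b) (g a)), Hass; auto.
Qed.

Definition Dm (t : Q -> Q) (u e : Q) := ldiv (t u) (t (u ⋅ e)).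
Lemma D_spec t u e : t (u ⋅ e) = t u ⋅ Dm t u e.
Proof. unfold Dm. rewrite mulldiv. reflexivity. Qed.

Definition Aff (t : Q -> Q) := (forall u v, f u = f v -> f (t u) = f (t v)) /\
  (forall u, Hom (Dm t u)).

Lemma Aff_comp t t' : Aff t -> Aff t' -> Aff (fun w => t (t' w)).
Proof. intros [R1 A1] [R2 A2]. split; auto. intro u.
  apply (Hom_ext (fun e => Dm t (t' u) (Dm t' u e))).
  - intro a. unfold Dm at 1 3. rewrite <- D_spec. reflexivity.
  - apply Hom_comp; auto.
Qed.

Lemma X_D t u e : (forall u v, f u = f v -> f (t u) = f (t v)) -> X e -> X (Dm t u e).
Proof. intros R He. apply HX in He. apply HX. unfold Dm. rewrite f_ldiv.
  rewrite (R (u ⋅ e) u). apply ldiv_same. rewrite Hf, He, mulr1. reflexivity. Qed.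

Lemma Aff_L z : Aff (fun w => z ⋅ w).
Proof. assert (R : forall u v, f u = f v -> f (z ⋅ u) = f (z ⋅ v)).
  { intros u v E. rewrite !Hf, E. reflexivity. }
  split; auto. intro u.
  apply (Hom_ext (fun e => inv (z ⋅ u) ⋅ (z ⋅ (u ⋅ e)))).
  - intro a. unfold Dm. rewrite ldiv_inv. reflexivity.
  - apply Hom_of_SA.
    + eapply (SA (fun e => inv (z ⋅ u) ⋅ (z ⋅ (u ⋅ e)))). eapply AT.
      * exact (Atp_comp _ _ _ _ _ _ (sigmaA_inv (z ⋅ u)) (Atp_comp _ _ _ _ _ _ (sigmaA z) (sigmaA u))).
      * cbv beta. rewrite mulr1. apply inv_mul.
    + rewrite mulr1. apply inv_mul.
    + intros a Ha. rewrite <- ldiv_inv. apply (X_D _ u a R Ha).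
Qed.

Lemma Aff_R z : Aff (fun w => w ⋅ z).
Proof. assert (R : forall u v, f u = f v -> f (u ⋅ z) = f (v ⋅ z)).
  { intros u v E. rewrite !Hf, E. reflexivity. }
  split; auto. intro u.
  apply (Hom_ext (fun e => inv (u ⋅ z) ⋅ ((u ⋅ e) ⋅ z))).
  - intro a. unfold Dm. rewrite ldiv_inv. reflexivity.
  - apply Hom_of_SA.
    + eapply (SA (fun e => inv (u ⋅ z) ⋅ ((u ⋅ e) ⋅ z))). eapply AT.
      * exact (Atp_comp _ _ _ _ _ _ (sigmaA_inv (u ⋅ z)) (Atp_comp _ _ _ _ _ _ (rhoA z) (sigmaA u))).
      * cbv beta. rewrite mulr1. apply inv_mul.
    + rewrite mulr1. apply inv_mul.
    + intros a Ha. rewrite <- ldiv_inv. apply (X_D (fun w => w ⋅ z) u a R Ha).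
Qed.


Lemma K_gen t1 t2 t3 t1' t2' : Atp t1 t2 t3 -> Aff t1' -> Aff t2' -> Aff t3 ->
  (forall w, t1 (t1' w) = w) -> (forall w, t2 (t2' w) = w) ->
  t1' (t1 one) = one -> t2' (t2 one) = one ->
  exists al be, Hom al /\ Hom be /\ forall x y, X x -> X y ->
    (t1 one ⋅ x) ⋅ (t2 one ⋅ y) = (t1 one ⋅ t2 one) ⋅ (al x ⋅ be y).
Proof.
  intros HA [R1 A1] [R2 A2] [R3 A3] I1 I2 P1 P2.
  exists (fun e => Dm t3 one (Dm t1' (t1 one) e)), (fun e => Dm t3 one (Dm t2' (t2 one) e)).
  split; [apply Hom_comp; auto|]. split; [apply Hom_comp; auto|].
  intros x y Hx Hy.
  rewrite <- (I1 (t1 one ⋅ x)), <- (I2 (t2 one ⋅ y)), HA.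
  rewrite (D_spec t1' (t1 one) x), (D_spec t2' (t2 one) y), P1, P2, !mul1l.
  assert (E3 : t3 one = t1 one ⋅ t2 one) by (rewrite HA, mulr1; reflexivity).
  rewrite <- (mul1l _ (Dm t1' (t1 one) x ⋅ Dm t2' (t2 one) y)) at 1.
  rewrite D_spec, E3. cbv beta. f_equal.
  apply (proj2 (A3 one)); apply X_D; auto.
Qed.

Hypothesis H3 : divisible Q 3.

Lemma K p q : exists al be, Hom al /\ Hom be /\ forall x y, X x -> X y ->
    (p ⋅ x) ⋅ (q ⋅ y) = (p ⋅ q) ⋅ (al x ⋅ be y).
Proof.
  destruct (H3 (rdiv q p)) as [x Hx]. simpl in Hx. rewrite mulr1 in Hx.
  assert (E1: (fun u => p⋅(x⋅(u⋅inv x))) one = p)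
    by (cbv beta; rewrite mul1l, mul_inv, mulr1; reflexivity).
  assert (E2: (fun v => (((x⋅v)⋅x)⋅x)⋅p) one = q)
    by (cbv beta; rewrite mulr1, <- flex, Hx, mulrdiv; reflexivity).
  destruct (K_gen (fun u => p⋅(x⋅(u⋅inv x))) (fun v => (((x⋅v)⋅x)⋅x)⋅p)
     (fun w => (p⋅((x⋅(w⋅x))⋅x))⋅p) (fun w => (inv x⋅(inv p⋅w))⋅x)
     (fun w => inv x⋅(((w⋅inv p)⋅inv x)⋅inv x))) as [al [be [Ha [Hb He]]]].
  - exact (Atp_comp _ _ _ _ _ _ (tauA p) (Atp_comp _ _ _ _ _ _ (tauA x) (rhoA x))).
  - exact (Aff_comp _ _ (Aff_R x) (Aff_comp _ _ (Aff_L (inv x)) (Aff_L (inv p)))).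
  - exact (Aff_comp _ _ (Aff_L (inv x)) (Aff_comp _ _ (Aff_R (inv x))
            (Aff_comp _ _ (Aff_R (inv x)) (Aff_R (inv p))))).
  - exact (Aff_comp _ _ (Aff_R p) (Aff_comp _ _ (Aff_L p) (Aff_comp _ _ (Aff_R x)
            (Aff_comp _ _ (Aff_L x) (Aff_R x))))).
  - intro w. cbv beta. rewrite mulKr, !mulKV. reflexivity.
  - intro w. cbv beta. rewrite mulKV, !mulVK. reflexivity.
  - rewrite E1. cbv beta. rewrite inv_mul, mulr1, inv_mul. reflexivity.
  - rewrite E2. cbv beta. rewrite <- (rdiv_inv q p), <- Hx, (flex x x), !mulKr, inv_mul. reflexivity.
  - exists al, be. rewrite E1, E2 in He. split; auto.
Qed.

Lemma K_inj_r p q al be : Hom al -> Hom be ->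
  (forall x y, X x -> X y -> (p⋅x)⋅(q⋅y) = (p⋅q)⋅(al x⋅be y)) ->
  forall y y', X y -> X y' -> be y = be y' -> y = y'.
Proof. intros Ha Hb He y y' Hy Hy' E.
  pose proof (He one y X_one Hy) as e1. pose proof (He one y' X_one Hy') as e2.
  rewrite (Hom_one _ Ha), mul1l, mulr1 in e1, e2.
  apply (canl _ q), (canl _ p). rewrite e1, e2, E. reflexivity.
Qed.

Lemma K_inj_l p q al be : Hom al -> Hom be ->
  (forall x y, X x -> X y -> (p⋅x)⋅(q⋅y) = (p⋅q)⋅(al x⋅be y)) ->
  forall x x', X x -> X x' -> al x = al x' -> x = x'.
Proof. intros Ha Hb He x x' Hx Hx' E.
  pose proof (He x one Hx X_one) as e1. pose proof (He x' one Hx' X_one) as e2.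
  rewrite (Hom_one _ Hb), !mulr1 in e1, e2.
  apply (canl _ p), (canr _ q). rewrite e1, e2, E. reflexivity.
Qed.

Definition GX (u : nat -> Q) := forall i, X (u i).
Definition pm (e u : nat -> Q) : nat -> Q := fun i => e i ⋅ u i.

Lemma GX_pm u u' : GX u -> GX u' -> GX (pm u u').
Proof. intros H H' i. apply X_mul; auto. Qed.

Lemma lin t : forall ex ey, exists F : (nat -> Q) -> (nat -> Q) -> Q,
  (forall ux uy, GX ux -> GX uy -> X (F ux uy) /\
      teval (pm ex ux) (pm ey uy) t = teval ex ey t ⋅ F ux uy) /\
  (forall ux uy ux' uy', GX ux -> GX uy -> GX ux' -> GX uy' ->
      F (pm ux ux') (pm uy uy') = F ux uy ⋅ F ux' uy').
Proof.
  induction t as [n|n| |s IHs r IHr|s IHs r IHr|s IHs r IHr]; intros ex ey.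
  - exists (fun ux uy => ux n). split; [intros; split; [apply H|reflexivity] | intros; reflexivity].
  - exists (fun ux uy => uy n). split; [intros; split; [apply H0|reflexivity] | intros; reflexivity].
  - exists (fun _ _ => one). split.
    + intros; split; [apply X_one| simpl; rewrite mulr1; reflexivity].
    + intros; rewrite mulr1; reflexivity.
  - destruct (IHs ex ey) as [Fs [Hs As]]; destruct (IHr ex ey) as [Fr [Hr Ar]].
    destruct (K (teval ex ey s) (teval ex ey r)) as [al [be [Ha [Hb He]]]].
    exists (fun ux uy => al (Fs ux uy) ⋅ be (Fr ux uy)). split.
    + intros ux uy Hx Hy. destruct (Hs ux uy Hx Hy) as [Xs Es]; destruct (Hr ux uy Hx Hy) as [Xr Er].
      split.
      * apply X_mul; [apply Ha|apply Hb]; auto.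
      * simpl. rewrite Es, Er, He; auto.
    + intros ux uy ux' uy' G1 G2 G3 G4.
      destruct (Hs ux uy G1 G2) as [Xs Es]; destruct (Hr ux uy G1 G2) as [Xr Er].
      destruct (Hs ux' uy' G3 G4) as [Xs' Es']; destruct (Hr ux' uy' G3 G4) as [Xr' Er'].
      rewrite As, Ar, (proj2 Ha), (proj2 Hb); auto.
      apply swap4; [apply Ha|apply Ha|apply Hb|apply Hb]; auto.
  - destruct (IHs ex ey) as [Fs [Hs As]]; destruct (IHr ex ey) as [Fr [Hr Ar]].
    set (S := teval ex ey s) in *. set (R := teval ex ey r) in *.
    destruct (K S (ldiv S R)) as [al [be [Ha [Hb He]]]].
    set (F := fun ux uy => ldiv (ldiv S R)
           (ldiv (teval (pm ex ux) (pm ey uy) s) (teval (pm ex ux) (pm ey uy) r))).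
    assert (XF : forall ux uy, GX ux -> GX uy -> X (F ux uy)).
    { intros ux uy Hx Hy. destruct (Hs ux uy Hx Hy) as [Xs Es]; destruct (Hr ux uy Hx Hy) as [Xr Er].
      apply HX. unfold F. rewrite !f_ldiv, Es, Er, !Hf.
      apply HX in Xs. apply HX in Xr. rewrite Xs, Xr, !mulr1. apply ldiv_same. }
    assert (rel : forall ux uy, GX ux -> GX uy -> Fr ux uy = al (Fs ux uy) ⋅ be (F ux uy)).
    { intros ux uy Hx Hy. destruct (Hs ux uy Hx Hy) as [Xs Es]; destruct (Hr ux uy Hx Hy) as [Xr Er].
      pose proof (He (Fs ux uy) (F ux uy) Xs (XF ux uy Hx Hy)) as E.
      assert (e1 : ldiv S R ⋅ F ux uy = ldiv (teval (pm ex ux) (pm ey uy) s) (teval (pm ex ux) (pm ey uy) r))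
        by (unfold F; apply mulldiv).
      rewrite e1, <- Es, (mulldiv _ (teval (pm ex ux) (pm ey uy) s)), Er, (mulldiv _ S) in E.
      apply (canl _ R). exact E. }
    exists F. split.
    + intros ux uy Hx Hy. split; [apply XF; auto|].
      simpl. unfold F. rewrite mulldiv. reflexivity.
    + intros ux uy ux' uy' G1 G2 G3 G4.
      apply (K_inj_r _ _ _ _ Ha Hb He); [apply XF; apply GX_pm; auto | apply X_mul; apply XF; auto |].
      destruct (Hs ux uy G1 G2) as [Xs Es]; destruct (Hs ux' uy' G3 G4) as [Xs' Es'].
      apply (canl _ (al (Fs (pm ux ux') (pm uy uy')))).
      rewrite <- rel by (apply GX_pm; auto).
      rewrite Ar, (rel ux uy), (rel ux' uy'), As, (proj2 Ha), (proj2 Hb); auto; try (apply XF; auto).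
      apply swap4; [apply Ha|apply Hb|apply Ha|apply Hb]; auto.
  - destruct (IHs ex ey) as [Fs [Hs As]]; destruct (IHr ex ey) as [Fr [Hr Ar]].
    set (S := teval ex ey s) in *. set (R := teval ex ey r) in *.
    destruct (K (rdiv S R) R) as [al [be [Ha [Hb He]]]].
    set (F := fun ux uy => ldiv (rdiv S R)
           (rdiv (teval (pm ex ux) (pm ey uy) s) (teval (pm ex ux) (pm ey uy) r))).
    assert (XF : forall ux uy, GX ux -> GX uy -> X (F ux uy)).
    { intros ux uy Hx Hy. destruct (Hs ux uy Hx Hy) as [Xs Es]; destruct (Hr ux uy Hx Hy) as [Xr Er].
      apply HX. unfold F. rewrite f_ldiv, !f_rdiv, Es, Er, !Hf.
      apply HX in Xs. apply HX in Xr. rewrite Xs, Xr, !mulr1. apply ldiv_same. }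
    assert (rel : forall ux uy, GX ux -> GX uy -> Fs ux uy = al (F ux uy) ⋅ be (Fr ux uy)).
    { intros ux uy Hx Hy. destruct (Hs ux uy Hx Hy) as [Xs Es]; destruct (Hr ux uy Hx Hy) as [Xr Er].
      pose proof (He (F ux uy) (Fr ux uy) (XF ux uy Hx Hy) Xr) as E.
      assert (e1 : rdiv S R ⋅ F ux uy = rdiv (teval (pm ex ux) (pm ey uy) s) (teval (pm ex ux) (pm ey uy) r))
        by (unfold F; apply mulldiv).
      rewrite e1, <- Er, (mulrdiv _ (teval (pm ex ux) (pm ey uy) r)), Es, (mulrdiv _ R) in E.
      apply (canl _ S). exact E. }
    exists F. split.
    + intros ux uy Hx Hy. split; [apply XF; auto|].
      simpl. unfold F. rewrite mulldiv. reflexivity.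
    + intros ux uy ux' uy' G1 G2 G3 G4.
      apply (K_inj_l _ _ _ _ Ha Hb He); [apply XF; apply GX_pm; auto | apply X_mul; apply XF; auto |].
      destruct (Hr ux uy G1 G2) as [Xr Er]; destruct (Hr ux' uy' G3 G4) as [Xr' Er'].
      apply (canr _ (be (Fr (pm ux ux') (pm uy uy')))).
      rewrite <- rel by (apply GX_pm; auto).
      rewrite As, (rel ux uy), (rel ux' uy'), Ar, (proj2 Ha), (proj2 Hb); auto; try (apply XF; auto).
      apply swap4; [apply Ha|apply Hb|apply Ha|apply Hb]; auto.
Qed.

Lemma main : abelian_congruence Q (cong_of Q X).
Proof.
  intros t a b c d Hab Hcd Heq.
  pose (ux := fun i => ldiv (a i) (b i)). pose (uy := fun i => ldiv (c i) (d i)).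
  pose (o := fun _ : nat => (one : Q)).
  assert (Gux : GX ux).
  { intro i. destruct (Hab i) as [x [Hx E]]. unfold ux. rewrite E, ldivK. exact Hx. }
  assert (Guy : GX uy).
  { intro i. destruct (Hcd i) as [x [Hx E]]. unfold uy. rewrite E, ldivK. exact Hx. }
  assert (Go : GX o) by (intro; apply X_one).
  assert (Eb : b = pm a ux) by (apply functional_extensionality; intro i; unfold pm, ux; rewrite mulldiv; reflexivity).
  assert (Ed : d = pm c uy) by (apply functional_extensionality; intro i; unfold pm, uy; rewrite mulldiv; reflexivity).
  assert (Ea : a = pm a o) by (apply functional_extensionality; intro i; unfold pm, o; rewrite mulr1; reflexivity).
  assert (Ec : c = pm c o) by (apply functional_extensionality; intro i; unfold pm, o; rewrite mulr1; reflexivity).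
  assert (Eux : ux = pm ux o) by (apply functional_extensionality; intro i; unfold pm, o; rewrite mulr1; reflexivity).
  assert (Euy : uy = pm o uy) by (apply functional_extensionality; intro i; unfold pm, o; rewrite mul1l; reflexivity).
  destruct (lin t a c) as [F [HF AF]].
  assert (F0 : F o uy = one).
  { destruct (HF o uy Go Guy) as [_ E]. rewrite <- Ea, <- Ed, <- Heq in E.
    apply (canl _ (teval a c t)). rewrite <- E, mulr1. reflexivity. }
  destruct (HF ux o Gux Go) as [_ E1]. destruct (HF ux uy Gux Guy) as [_ E2].
  rewrite <- Ec in E1. rewrite <- Eb in E1, E2. rewrite <- Ed in E2.
  rewrite E1, E2.
  rewrite Eux at 2. rewrite Euy at 1. rewrite AF, F0, mulr1; auto.
Qed.

End Main.

Theorem theorem4p3 (Q : Loop) (X : Q -> Prop) :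
  Moufang Q -> divisible Q 3 ->
  normal_subloop Q X -> sub_commutative_group Q X -> sub_divisible Q X 2 ->
  abelian_congruence Q (cong_of Q X).
Proof.
  intros HM H3 [L [f [Hf HX]]] [Hass Hcomm] H2.
  eapply main; eauto.
Qed.
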